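(* Let $p\ge1$, $m\in\mathbb{N}$, $a,b>0$, $\beta\in\mathbb{R}^p$, let $\xi$ be a design on $\mathcal{X}$, and let $G$ be any real $p\times p$ matrix. Then the matrix $\frac{b}{a}G+\frac{m}{a}e_1e_1^T$ is a generalized inverse of $M(\xi;\beta)$ (i.e. $M(\xi;\beta)\bigl(\frac{b}{a}G+\frac{m}{a}e_1e_1^T\bigr)M(\xi;\beta)=M(\xi;\beta)$) if and only if $G$ is a generalized inverse of $M_{Po}(\xi;\beta)$ (i.e. $M_{Po}(\xi;\beta)GM_{Po}(\xi;\beta)=M_{Po}(\xi;\beta)$).
   Context: Let $\mathcal{X}\subseteq\mathbb{R}^k$ be a design region and $f=(1,f_1,\ldots,f_{p-1})^T:\mathcal{X}\to\mathbb{R}^p$ a vector of regression functions whose first component is the constant 1. A design $\xi$ is a probability measure on $\mathcal{X}$ with finite support $x_1,\ldots,x_l$ and weights $w_1,\ldots,w_l\ge0$, $\sum_j w_j=1$. The Poisson information matrix is $M_{Po}(\xi;\beta)=\sum_{j=1}^l w_j\exp(f(x_j)^T\beta)f(x_j)f(x_j)^T$, and the Poisson–Gamma information matrix is $M(\xi;\beta)=\frac{a}{b}\Bigl(M_{Po}(\xi;\beta)-\frac{M_{Po}(\xi;\beta)e_1e_1^TM_{Po}(\xi;\beta)}{e_1^TM_{Po}(\xi;\beta)e_1+b/m}\Bigr)$, where $e_1$ is the first standard unit vector of $\mathbb{R}^p$. *)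

(* Defs.v *)
From HB Require Import structures.
From mathcomp Require Import all_boot all_order all_algebra.
From mathcomp Require Import all_classical all_reals all_analysis.
Set Implicit Arguments. Unset Strict Implicit. Unset Printing Implicit Defensive.
Import Order.TTheory GRing.Theory Num.Theory.
Local Open Scope ring_scope.

(* Dimension p >= 1 is encoded as p.+1; e_1 is the first standard unit vector. *)
Definition e1 (R : nzRingType) (p : nat) : 'cV[R]_p.+1 := delta_mx 0 0.

Definition is_design (R : realType) (k l : nat) (X : set 'rV[R]_k)
  (xs : 'I_l -> 'rV[R]_k) (w : 'I_l -> R) : Prop :=
  (forall j, X (xs j)) /\ (forall j, 0 <= w j) /\ \sum_(j < l) w j = 1.

Definition MPo (R : realType) (k p l : nat) (f : 'rV[R]_k -> 'cV[R]_p.+1)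
  (xs : 'I_l -> 'rV[R]_k) (w : 'I_l -> R) (beta : 'cV[R]_p.+1) : 'M[R]_p.+1 :=
  \sum_(j < l) (w j * expR (((f (xs j))^T *m beta) 0 0)) *: (f (xs j) *m (f (xs j))^T).

Definition MPG (R : realType) (k p l : nat) (f : 'rV[R]_k -> 'cV[R]_p.+1)
  (xs : 'I_l -> 'rV[R]_k) (w : 'I_l -> R) (beta : 'cV[R]_p.+1)
  (a b : R) (m : nat) : 'M[R]_p.+1 :=
  let P := MPo f xs w beta in
  (a / b) *: (P - (((((e1 R p)^T *m P *m e1 R p) 0 0) + b / m%:R)^-1
                    *: (P *m e1 R p *m (e1 R p)^T *m P))).

(* Main.v *)
Require Import Defs.
From HB Require Import structures.
From mathcomp Require Import all_boot all_order all_algebra.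
From mathcomp Require Import all_classical all_reals all_analysis.
From mathcomp Require Import ring lra.
Import Order.TTheory GRing.Theory Num.Theory.
Local Open Scope ring_scope.

Lemma comb (R : pzRingType) (V : lmodType R) (X Y : V) x y z :
  X - x *: Y + (y *: Y - z *: Y) = X + (y - x - z) *: Y.
Proof. by rewrite !scalerBl -!addrA; congr (X + _); rewrite !addrA (addrC (- (x *: Y))). Qed.

Lemma comb2 (R : comPzRingType) (V : lmodType R) (X Y : V) x y c :
  X + y *: Y - (x *: Y + x *: (y *: (c *: Y))) = X + (y - x - x * (y * c)) *: Y.
Proof.
rewrite !scalerA !scalerBl -!addrA opprD; congr (X + _).
by rewrite mulrA.
Qed.

Lemma alg2 (R : fieldType) n (P G E : 'M[R]_n) (a b k c : R) :
  a != 0 -> b != 0 -> k != 0 -> c + b / k != 0 ->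
  E *m P *m E = c *: E ->
  (a / b) *: (P - (c + b / k)^-1 *: (P *m E *m P))
   *m ((b / a) *: G + (k / a) *: E) *m
  ((a / b) *: (P - (c + b / k)^-1 *: (P *m E *m P)))
  = (a / b) *: (P - (c + b / k)^-1 *: (P *m E *m P))
  <-> P *m G *m P = P.
Proof.
move=> a0 b0 k0 d0 EPE.
have ck : c * k + b != 0.
  have -> : c * k + b = (c + b / k) * k by rewrite mulrDl divfK.
  by rewrite mulf_neq0.
move: d0; set d := c + b / k => d0.
have PEW : P *m E *m (P *m E *m P) = c *: (P *m E *m P).
  have -> : P *m E *m (P *m E *m P) = P *m (E *m P *m E) *m P by rewrite !mulmxA.
  by rewrite EPE -scalemxAr -scalemxAl.
have PEPE : P *m E *m (P *m E) = c *: (P *m E).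
  have -> : P *m E *m (P *m E) = P *m (E *m P *m E) by rewrite !mulmxA.
  by rewrite EPE -scalemxAr.
have EPEP : E *m P *m (E *m P) = c *: (E *m P).
  have -> : E *m P *m (E *m P) = (E *m P *m E) *m P by rewrite !mulmxA.
  by rewrite EPE -scalemxAl.
have sc : k / b - d^-1 - k / b * (d^-1 * c) = 0.
  by rewrite /d; field; rewrite k0 b0 ck.
set W := P *m E *m P.
pose L : 'M[R]_n := 1%:M - d^-1 *: (P *m E).
pose Rr : 'M[R]_n := 1%:M - d^-1 *: (E *m P).
pose Linv : 'M[R]_n := 1%:M + (k / b) *: (P *m E).
pose Rinv : 'M[R]_n := 1%:M + (k / b) *: (E *m P).
have hL : Linv *m L = 1%:M.
  rewrite /Linv /L mulmxDl mul1mx mulmxBr mulmx1 -scalemxAl -!scalemxAr PEPE.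
  rewrite !scalerA comb [X in X *: _](_ : _ = 0) ?scale0r ?addr0 //.
  by rewrite /d; field; rewrite k0 b0 ck.
have hR : Rr *m Rinv = 1%:M.
  rewrite /Rinv /Rr mulmxBl mul1mx mulmxDr mulmx1 -scalemxAl -!scalemxAr EPEP.
  rewrite comb2 [X in X *: _](_ : _ = 0) ?scale0r ?addr0 //.
  by rewrite /d; field; rewrite k0 b0 ck.
have hLY : L *m (P + (k / b) *: W) = P.
  rewrite /L mulmxBl mul1mx -scalemxAl mulmxDr -scalemxAr PEW.
  rewrite scalerDr comb2 [X in X *: _](_ : _ = 0) ?scale0r ?addr0 //.
  by rewrite /d; field; rewrite k0 b0 ck.
have hQ1 : L *m P = P - d^-1 *: W.
  by rewrite /L mulmxBl mul1mx -scalemxAl.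
have hQ2 : P *m Rr = P - d^-1 *: W.
  by rewrite /Rr mulmxBr mulmx1 -scalemxAr mulmxA.
have hH : (b / a) *: G + (k / a) *: E = (b / a) *: (G + (k / b) *: E).
  by rewrite scalerDr scalerA; congr (_ + _ *: _); field; rewrite a0 b0.
have hM : (a / b) *: (P - d^-1 *: W) = (a / b) *: (L *m (P + (k / b) *: W) *m Rr).
  by rewrite hLY hQ2.
have hMHM : (a / b) *: (P - d^-1 *: W) *m ((b / a) *: G + (k / a) *: E) *m
    ((a / b) *: (P - d^-1 *: W)) =
    (a / b) *: (L *m (P *m G *m P + (k / b) *: W) *m Rr).
  rewrite hH -?scalemxAl -?scalemxAr -?scalemxAl -?scalemxAr !scalerA.
  have -> : a / b * (a / b * (b / a)) = a / b by field; rewrite a0 b0.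
  congr (_ *: _).
  rewrite -{1}hQ1 -hQ2.
  have -> : L *m P *m (G + (k / b) *: E) *m (P *m Rr)
     = L *m (P *m (G + (k / b) *: E) *m P) *m Rr by rewrite !mulmxA.
  by congr (L *m _ *m Rr); rewrite mulmxDr mulmxDl -scalemxAr -scalemxAl.
rewrite hMHM; split; last by move=> ->; rewrite hM.
rewrite hM => h.
have := congr1 (fun Z => Linv *m ((a / b)^-1 *: Z) *m Rinv) h.
rewrite /= !scalerA mulVf ?mulf_neq0 ?invr_neq0 // !scale1r.
have asc X : Linv *m (L *m X *m Rr) *m Rinv = X.
  have -> : Linv *m (L *m X *m Rr) *m Rinv = (Linv *m L) *m X *m (Rr *m Rinv)
    by rewrite !mulmxA.
  by rewrite hL hR mul1mx mulmx1.
by rewrite !asc => /addIr.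
Qed.

Lemma reassoc (R : ringType) n (u : 'cV[R]_n) (A : 'M[R]_n) :
  u *m u^T *m A *m (u *m u^T) = u *m (u^T *m A *m u) *m u^T.
Proof. by rewrite !mulmxA. Qed.

Theorem lemma2 (R : realType) (k p : nat) (X : set 'rV[R]_k)
  (f : 'rV[R]_k -> 'cV[R]_p.+1)
  (hf1 : forall x, X x -> f x 0 0 = 1)
  (m : nat) (hm : (0 < m)%N) (a b : R) (ha : 0 < a) (hb : 0 < b)
  (beta : 'cV[R]_p.+1) (l : nat) (xs : 'I_l -> 'rV[R]_k) (w : 'I_l -> R)
  (hxi : is_design X xs w) (G : 'M[R]_p.+1) :
  let M := MPG f xs w beta a b m in
  let MP := MPo f xs w beta in
  M *m ((b / a) *: G + (m%:R / a) *: (e1 R p *m (e1 R p)^T)) *m M = M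
  <-> MP *m G *m MP = MP.
Proof.
move=> M MP.
rewrite /M /MPG /= -/MP.
set e := e1 R p.
have -> : MP *m e *m e^T *m MP = MP *m (e *m e^T) *m MP by rewrite !mulmxA.
have c0 : 0 <= (e^T *m MP *m e) 0 0.
  rewrite /e /e1 trmx_delta -rowE -colE !mxE /MP /MPo summxE.
  apply: sumr_ge0 => j _; rewrite !mxE big_ord1 mxE.
  case: hxi => hX [hw _]; rewrite hf1 // !mulr1.
  by rewrite mulr_ge0 ?hw ?expR_ge0.
have m0 : (0 : R) < m%:R by rewrite ltr0n.
apply: alg2.
- by rewrite gt_eqF.
- by rewrite gt_eqF.
- by rewrite gt_eqF.
- have bm : 0 < b / m%:R by rewrite divr_gt0.
  by rewrite gt_eqF //; lra.
rewrite reassoc.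
by rewrite {1}[e^T *m MP *m e]mx11_scalar mul_mx_scalar -scalemxAl.
Qed.
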